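(* Let $q>0$, $\ell\in\{0,1,2,\ldots\}$ and $n\in\{1,2,3,\ldots\}$. Then $$\tilde\gamma_\ell^{(n)}(q)=(-1)^\ell\sum_{k=0}^{\ell}(-1)^k k!\binom{\ell}{k}s(n+1,k+1)\,\zeta_E^{(\ell-k)}(n+1,q),$$ where $\tilde\gamma_\ell^{(n)}$ denotes the $n$-th derivative of $\tilde\gamma_\ell$ with respect to $q$.
   Context: For $q>0$, $\zeta_E(z,q)=\sum_{n=0}^\infty (-1)^n (n+q)^{-z}$ for $\mathrm{Re}(z)>0$, extended by analytic continuation to an entire function of $z$; $\zeta_E^{(m)}(z,q)$ denotes $\frac{\partial^m}{\partial z^m}\zeta_E(z,q)$. The modified Stieltjes constants $\tilde\gamma_k(q)$ are defined by the Taylor expansion $\zeta_E(z,q)=\sum_{k=0}^\infty\frac{(-1)^k\tilde\gamma_k(q)}{k!}(z-1)^k$. $s(n,k)$ are the (signed) Stirling numbers of the first kind: $x(x-1)\cdots(x-n+1)=\sum_{k=0}^n s(n,k)x^k$. *)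

(* Defs.v *)
From Stdlib Require Import Reals ZArith.
From Coquelicot Require Import Coquelicot.
Open Scope R_scope.

(* zeta_E(z,q) = sum_{n>=0} (-1)^n (n+q)^(-z), for real z > 0 and q > 0
   (the series converges there; Series is the limit of partial sums). *)
Definition zetaE (z q : R) : R :=
  Series (fun n : nat => (-1) ^ n * Rpower (INR n + q) (- z)).

Definition zetaE_deriv (m : nat) (z q : R) : R :=
  Derive_n (fun w => zetaE w q) m z.

(* Modified Stieltjes constants: Taylor coefficients of zeta_E(., q) at z = 1,
   zeta_E(z,q) = sum_k (-1)^k gt_k(q)/k! (z-1)^k, i.e.
   gt_k(q) = (-1)^k * d^k/dz^k zeta_E(z,q) at z = 1. *)
Definition gamma_tilde (k : nat) (q : R) : R :=
  (-1) ^ k * zetaE_deriv k 1 q.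

(* Signed Stirling numbers of the first kind:
   x(x-1)...(x-n+1) = sum_k s(n,k) x^k, via the standard recurrence
   s(n+1,k+1) = s(n,k) - n s(n,k+1). *)
Fixpoint stirling1 (n k : nat) : Z :=
  match n, k with
  | O, O => 1%Z
  | O, S _ => 0%Z
  | S _, O => 0%Z
  | S n', S k' => (stirling1 n' k' - Z.of_nat n' * stirling1 n' (S k'))%Z
  end.

(* Main.v *)
Require Import Defs.
From Stdlib Require Import Reals ZArith.
From Coquelicot Require Import Coquelicot.
From Stdlib Require Import Lra Lia.
Open Scope R_scope.

Lemma sum_inv_sq_bound N :
  sum_f_R0 (fun n => / (INR n + 1) ^ 2) N <= 2 - / (INR N + 1).
Proof.
  induction N as [|N IH].
  - simpl. lra.
  - rewrite tech5, S_INR.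
    assert (H0 : 0 <= INR N) by apply pos_INR.
    assert (/ (INR N + 1 + 1) ^ 2 <= / (INR N + 1) - / (INR N + 1 + 1)).
    { replace (/ (INR N + 1) - / (INR N + 1 + 1)) with (/ ((INR N + 1) * (INR N + 1 + 1))) by (field; lra).
      apply Rinv_le_contravar; [nra | simpl; nra]. }
    lra.
Qed.

Lemma ex_series_inv_sq : ex_series (fun n => / (INR n + 1) ^ 2).
Proof.
  destruct (ex_finite_lim_seq_incr (sum_n (fun n => / (INR n + 1) ^ 2)) 2) as [l Hl].
  - intros n. rewrite sum_Sn. set (s := sum_n _ n). change (s <= s + / (INR (S n) + 1)^2).
    assert (0 < / (INR (S n) + 1) ^ 2).
    { apply Rinv_0_lt_compat. apply pow_lt. pose proof (pos_INR (S n)). lra. }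
    lra.
  - intros n. rewrite sum_n_Reals. eapply Rle_trans. apply sum_inv_sq_bound.
    assert (0 < / (INR n + 1)). { apply Rinv_0_lt_compat. pose proof (pos_INR n). lra. } lra.
  - exists l. exact Hl.
Qed.

Lemma MVI (f df : R -> R) a b B :
  (forall x, Rmin a b <= x <= Rmax a b -> is_derive f x (df x)) ->
  (forall x, Rmin a b <= x <= Rmax a b -> Rabs (df x) <= B) ->
  Rabs (f b - f a) <= B * Rabs (b - a).
Proof.
  intros Hd Hb.
  destruct (MVT_gen f a b df) as [c [Hc He]].
  - intros x Hx. apply Hd. lra.
  - intros x Hx. apply continuity_pt_filterlim. apply (@ex_derive_continuous R_AbsRing R_NormedModule).
    eexists. apply Hd. exact Hx.
  - rewrite He, Rabs_mult. apply Rmult_le_compat_r. apply Rabs_pos. apply Hb. exact Hc.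
Qed.

Lemma exR_le (a b : nat -> R) : (forall n, Rabs (a n) <= b n) -> ex_series b -> ex_series a.
Proof. intros H1 H2. apply (@ex_series_le R_AbsRing R_CompleteNormedModule a b); auto. Qed.
Lemma exR_plus (a b : nat -> R) : ex_series a -> ex_series b -> ex_series (fun n => a n + b n).
Proof. intros H1 H2. apply (@ex_series_plus R_AbsRing R_NormedModule a b); auto. Qed.
Lemma exR_minus (a b : nat -> R) : ex_series a -> ex_series b -> ex_series (fun n => a n - b n).
Proof. intros H1 H2. apply (@ex_series_minus R_AbsRing R_NormedModule a b); auto. Qed.
Lemma exR_scal (c : R) (a : nat -> R) : ex_series a -> ex_series (fun n => c * a n).
Proof. intros H1. apply (@ex_series_scal_l R_AbsRing R_NormedModule c a); auto. Qed.
Lemma exR_incr (a : nat -> R) n : ex_series a -> ex_series (fun k => a (n + k)%nat).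
Proof. intros H1. apply (@ex_series_incr_n R_AbsRing R_NormedModule a n); auto. Qed.

Lemma sum_lin3 (a b c : nat -> R) h N :
  sum_f_R0 (fun j => a j - b j - h * c j) N = sum_f_R0 a N - sum_f_R0 b N - h * sum_f_R0 c N.
Proof. induction N; simpl; [ring | rewrite IHN; ring]. Qed.

Lemma deriv_series (F F' : nat -> R -> R) (M : nat -> R) (t0 r : R) :
  0 < r ->
  (forall j t, Rabs (t - t0) < r -> is_derive (F j) t (F' j t)) ->
  (forall j t, Rabs (t - t0) < r -> Rabs (F' j t) <= M j) ->
  ex_series M ->
  (forall t, Rabs (t - t0) < r -> ex_series (fun j => F j t)) ->
  is_derive (fun t => Series (fun j => F j t)) t0 (Series (fun j => F' j t0)).
Proof.
  intros Hr Hd HM HMs HFs.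
  assert (Ht0 : Rabs (t0 - t0) < r) by (rewrite Rminus_diag, Rabs_R0; lra).
  assert (HM0 : forall j, 0 <= M j).
  { intros j. eapply Rle_trans. apply Rabs_pos. apply (HM j t0 Ht0). }
  assert (HMVI : forall j h, Rabs h < r -> Rabs (F j (t0 + h) - F j t0) <= M j * Rabs h).
  { intros j h Hh. replace (Rabs h) with (Rabs (t0 + h - t0)) by (f_equal; ring).
    apply MVI with (df := F' j).
    - intros x Hx. apply Hd. apply Rle_lt_trans with (Rabs h); [|lra].
      unfold Rmin, Rmax in Hx. destruct (Rle_dec t0 (t0+h)); apply Rabs_le; split_Rabs; lra.
    - intros x Hx. apply HM.
      unfold Rmin, Rmax in Hx. destruct (Rle_dec t0 (t0+h)); split_Rabs; lra. }
  assert (HF's : ex_series (fun j => F' j t0)).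
  { apply (exR_le _ M); [intros j; apply (HM j t0 Ht0) | exact HMs]. }
  apply is_derive_Reals. intros eps Heps.
  destruct (proj1 (is_lim_seq_Reals _ _) (Series_correct _ HMs) (eps/8)) as [N HN]; [lra|].
  set (T := Series (fun k => M (S N + k)%nat)).
  assert (HT : Series M = sum_f_R0 M N + T) by (apply (Series_incr_n M (S N)); [lia | exact HMs]).
  assert (HT8 : T < eps / 8).
  { specialize (HN N (le_n N)). unfold R_dist in HN. rewrite sum_n_Reals in HN.
    apply Rabs_def2 in HN. lra. }
  assert (Hg : is_derive (fun t => sum_n (fun j => F j t) N) t0 (sum_n (fun j => F' j t0) N)).
  { apply (@is_derive_sum_n R_AbsRing R_NormedModule). intros k _. apply Hd. exact Ht0. }
  apply is_derive_Reals in Hg. destruct (Hg (eps/2)) as [d1 Hd1]; [lra|].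
  assert (Hdpos : 0 < Rmin d1 r) by (apply Rmin_pos; [apply cond_pos | lra]).
  exists (mkposreal _ Hdpos). intros h Hh0 Hh. simpl in Hh.
  assert (Hh1 : Rabs h < d1) by (eapply Rlt_le_trans; [exact Hh | apply Rmin_l]).
  assert (Hhr : Rabs h < r) by (eapply Rlt_le_trans; [exact Hh | apply Rmin_r]).
  specialize (Hd1 h Hh0 Hh1). rewrite !sum_n_Reals in Hd1.
  set (E := fun j => F j (t0 + h) - F j t0 - h * F' j t0).
  assert (HEs : ex_series E).
  { unfold E. apply exR_minus. apply exR_minus.
    apply HFs. replace (t0 + h - t0) with h by ring. exact Hhr.
    apply HFs. exact Ht0.
    apply exR_scal. exact HF's. }
  assert (HSE : Series (fun j => F j (t0 + h)) - Series (fun j => F j t0) - h * Series (fun j => F' j t0) = Series E).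
  { unfold E. rewrite Series_minus, Series_minus, Series_scal_l. reflexivity.
    apply HFs. replace (t0 + h - t0) with h by ring. exact Hhr. apply HFs; exact Ht0.
    apply exR_minus. apply HFs. replace (t0 + h - t0) with h by ring. exact Hhr. apply HFs; exact Ht0.
    apply exR_scal. exact HF's. }
  assert (HEsplit : Series E = sum_f_R0 E N + Series (fun k => E (S N + k)%nat))
    by (apply (Series_incr_n E (S N)); [lia | exact HEs]).
  assert (HEbound : forall k, Rabs (E k) <= 2 * Rabs h * M k).
  { intros k. unfold E. specialize (HMVI k h Hhr). specialize (HM k t0 Ht0).
    assert (Rabs (h * F' k t0) <= Rabs h * M k).
    { rewrite Rabs_mult. apply Rmult_le_compat_l. apply Rabs_pos. exact HM. }
    split_Rabs; nra. }
  assert (Htail : Rabs (Series (fun k => E (S N + k)%nat)) <= 2 * Rabs h * T).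
  { eapply Rle_trans. apply Series_Rabs.
    apply (exR_le _ (fun n => 2 * Rabs h * M (S N + n)%nat)). intros n. rewrite Rabs_Rabsolu. apply HEbound.
    apply exR_scal. now apply exR_incr.
    unfold T. rewrite <- Series_scal_l. apply Series_le.
    intros n. split. apply Rabs_pos. apply HEbound.
    apply exR_scal. now apply exR_incr. }
  assert (Hfin : sum_f_R0 E N = h * ((sum_f_R0 (fun j => F j (t0 + h)) N - sum_f_R0 (fun j => F j t0) N) / h - sum_f_R0 (fun j => F' j t0) N)).
  { unfold E. rewrite sum_lin3. field. exact Hh0. }
  assert (Habs : 0 < Rabs h) by (apply Rabs_pos_lt; exact Hh0).
  replace ((Series (fun j => F j (t0 + h)) - Series (fun j => F j t0)) / h - Series (fun j => F' j t0))
    with (Series E / h) by (rewrite <- HSE; field; exact Hh0).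
  rewrite Rabs_div by exact Hh0.
  apply Rmult_lt_reg_r with (Rabs h); [exact Habs|].
  unfold Rdiv. rewrite Rmult_assoc, Rinv_l, Rmult_1_r by lra.
  rewrite HEsplit, Hfin. eapply Rle_lt_trans. apply Rabs_triang.
  rewrite Rabs_mult. nra.
Qed.

Definition hh (m : nat) (z x : R) : R := (- ln x) ^ m * exp (- (z * ln x)).

Lemma hh_dz m z x : is_derive (fun z => hh m z x) z (hh (S m) z x).
Proof.
  unfold hh. auto_derive; auto. simpl. ring.
Qed.

Lemma hh_dx m z x : 0 < x ->
  is_derive (fun x => hh m z x) x (- INR m * hh (m - 1) (z + 1) x - z * hh m (z + 1) x).
Proof.
  intros Hx. unfold hh. auto_derive. auto.
  replace (- ((z + 1) * ln x)) with (- (z * ln x) + - ln x) by ring.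
  rewrite exp_plus, (exp_Ropp (ln x)), exp_ln by exact Hx.
  destruct m as [|m]. simpl. field. lra.
  replace (S m - 1)%nat with m by lia. simpl. field. lra.
Qed.

Lemma exp_pow_mult y k : exp y ^ k = exp (INR k * y).
Proof.
  induction k. simpl. rewrite Rmult_0_l, exp_0. reflexivity.
  rewrite S_INR. simpl. rewrite IHk, <- exp_plus. f_equal. ring.
Qed.

Lemma ln_pow_bound k a x : 0 < a -> 1 <= x -> (ln x) ^ k <= (INR k / a) ^ k * exp (a * ln x).
Proof.
  intros Ha Hx. assert (Hl : 0 <= ln x) by (rewrite <- ln_1; apply ln_le; lra).
  destruct k as [|k].
  - simpl. pose proof (exp_ineq1_le (a * ln x)). nra.
  - set (K := INR (S k)). assert (HK : 0 < K) by (apply lt_0_INR; lia).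
    set (y := a / K * ln x).
    assert (Hy : 0 <= y). { unfold y. apply Rmult_le_pos; [|exact Hl]. apply Rlt_le, Rdiv_lt_0_compat; lra. }
    assert (Hln : ln x = K / a * y) by (unfold y; field; lra).
    assert (Hye : y <= exp y) by (pose proof (exp_ineq1_le y); lra).
    rewrite Hln, Rpow_mult_distr.
    replace (a * (K / a * y)) with (K * y) by (field; lra).
    unfold K at 3; rewrite <- exp_pow_mult; fold K.
    apply Rmult_le_compat_l. apply pow_le. apply Rlt_le, Rdiv_lt_0_compat; lra.
    apply pow_incr. lra.
Qed.

Lemma hh_bound k a w x : 0 < a -> 2 + a <= w -> 1 <= x ->
  Rabs (hh k w x) <= (INR k / a) ^ k / x ^ 2.
Proof.
  intros Ha Hw Hx. assert (Hl : 0 <= ln x) by (rewrite <- ln_1; apply ln_le; lra).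
  unfold hh. rewrite Rabs_mult, <- RPow_abs, Rabs_Ropp, (Rabs_pos_eq (ln x)) by exact Hl.
  rewrite Rabs_pos_eq by (apply Rlt_le, exp_pos).
  assert (He : exp (- (w * ln x)) <= exp (- (a * ln x)) / x ^ 2).
  { assert (Hx2 : x ^ 2 = exp (2 * ln x)).
    { rewrite <- (exp_ln x) at 1 by lra. rewrite exp_pow_mult. f_equal. }
    rewrite Hx2. unfold Rdiv. rewrite <- exp_Ropp, <- exp_plus.
    assert (E : - (w * ln x) <= - (a * ln x) + - (2 * ln x)) by nra.
    destruct (Rle_lt_or_eq_dec _ _ E) as [E'|E'].
    - apply Rlt_le, exp_increasing. exact E'.
    - rewrite E'. lra. }
  pose proof (ln_pow_bound k a x Ha Hx) as Hp.
  assert (Hpos : 0 <= (INR k / a) ^ k).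
  { apply pow_le. apply Rmult_le_pos. apply pos_INR. apply Rlt_le, Rinv_0_lt_compat, Ha. }
  apply Rle_trans with ((INR k / a) ^ k * exp (a * ln x) * (exp (- (a * ln x)) / x ^ 2)).
  - apply Rmult_le_compat; auto. apply pow_le; exact Hl. apply Rlt_le, exp_pos.
  - rewrite exp_Ropp. right. field. split. lra. apply Rgt_not_eq, exp_pos.
Qed.

Lemma is_derive_shift (f : R -> R) c t d : is_derive f (t + c) d -> is_derive (fun t => f (t + c)) t d.
Proof.
  intros H. rewrite <- (Rmult_1_l d).
  apply (is_derive_comp f (fun t => t + c) t d 1). exact H.
  auto_derive; auto.
Qed.

Lemma second_diff (phi phi1 phi2 : R -> R) x B :
  (forall t, x <= t <= x + 2 -> is_derive phi t (phi1 t)) ->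
  (forall t, x <= t <= x + 2 -> is_derive phi1 t (phi2 t)) ->
  (forall t, x <= t <= x + 2 -> Rabs (phi2 t) <= B) ->
  Rabs (phi x - 2 * phi (x + 1) + phi (x + 2)) <= B.
Proof.
  intros H1 H2 HB.
  assert (Hm : forall a b, a <= b -> Rmin a b = a /\ Rmax a b = b).
  { intros a b Hab. unfold Rmin, Rmax. destruct (Rle_dec a b); split; lra. }
  pose proof (MVI (fun t => phi (t + 1) - phi t) (fun t => phi1 (t + 1) - phi1 t) x (x + 1) B) as HM.
  destruct (Hm x (x+1)) as [Hm1 Hm2]; [lra|]. rewrite Hm1, Hm2 in HM.
  replace (x + 1 - x) with 1 in HM by ring. rewrite Rabs_R1, Rmult_1_r in HM.
  replace (phi (x + 1 + 1) - phi (x + 1) - (phi (x + 1) - phi x)) with (phi x - 2 * phi (x + 1) + phi (x + 2)) in HM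
    by (replace (x + 1 + 1) with (x + 2) by ring; ring).
  apply HM.
  - intros t Ht. apply (is_derive_minus (fun t => phi (t + 1)) phi).
    apply is_derive_shift. apply H1. lra. apply H1. lra.
  - intros t Ht.
    pose proof (MVI phi1 phi2 t (t + 1) B) as HM'.
    destruct (Hm t (t+1)) as [Hm1' Hm2']; [lra|]. rewrite Hm1', Hm2' in HM'.
    replace (t + 1 - t) with 1 in HM' by ring. rewrite Rabs_R1, Rmult_1_r in HM'.
    apply HM'. intros y Hy. apply H2. lra. intros y Hy. apply HB. lra.
Qed.

Definition Dh m z x := hh m z x - 2 * hh m z (x + 1) + hh m z (x + 2).
Definition hh1 m z x := - INR m * hh (m - 1) (z + 1) x - z * hh m (z + 1) x.
Definition hh2 m z x := - INR m * hh1 (m - 1) (z + 1) x - z * hh1 m (z + 1) x.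

Lemma hh1_dx m z x : 0 < x -> is_derive (fun x => hh1 m z x) x (hh2 m z x).
Proof.
  intros Hx. unfold hh1, hh2.
  apply (is_derive_minus (fun x => - INR m * hh (m - 1) (z + 1) x) (fun x => z * hh m (z + 1) x)).
  apply (is_derive_scal (fun x => hh (m - 1) (z + 1) x)). apply hh_dx; exact Hx.
  apply (is_derive_scal (fun x => hh m (z + 1) x)). apply hh_dx; exact Hx.
Qed.

Lemma abs3 c1 c2 c3 y1 y2 y3 b1 b2 b3 :
  0 <= c1 -> 0 <= c2 -> 0 <= c3 -> Rabs y1 <= b1 -> Rabs y2 <= b2 -> Rabs y3 <= b3 ->
  Rabs (c1 * y1 + c2 * y2 + c3 * y3) <= c1 * b1 + c2 * b2 + c3 * b3.
Proof.
  intros. eapply Rle_trans. apply Rabs_triang. eapply Rle_trans. apply Rplus_le_compat_r. apply Rabs_triang.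
  rewrite !Rabs_mult, (Rabs_pos_eq c1), (Rabs_pos_eq c2), (Rabs_pos_eq c3) by assumption.
  repeat apply Rplus_le_compat; apply Rmult_le_compat_l; assumption.
Qed.

Lemma Dh_bound m a A : 0 < a -> exists C, forall z x, a <= z <= A -> 1 <= x -> Rabs (Dh m z x) <= C / x ^ 2.
Proof.
  intros Ha.
  set (K := fun k => (INR k / a) ^ k).
  assert (HK : forall k, 0 <= K k).
  { intros k. unfold K. apply pow_le. apply Rmult_le_pos. apply pos_INR. apply Rlt_le, Rinv_0_lt_compat, Ha. }
  exists (INR m * INR (m - 1) * K (m - 1 - 1)%nat + (INR m * (A + 1) + A * INR m) * K (m - 1)%nat + A * (A + 1) * K m).
  intros z x Hz Hx. unfold Dh.
  apply second_diff with (phi1 := hh1 m z) (phi2 := hh2 m z).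
  - intros t Ht. unfold hh1. apply hh_dx. lra.
  - intros t Ht. apply hh1_dx. lra.
  - intros t Ht.
    assert (Ht2 : 0 < t ^ 2) by (apply pow_lt; lra).
    assert (E : hh2 m z t = INR m * INR (m - 1) * hh (m - 1 - 1) (z + 1 + 1) t
                 + (INR m * (z + 1) + z * INR m) * hh (m - 1) (z + 1 + 1) t
                 + z * (z + 1) * hh m (z + 1 + 1) t) by (unfold hh2, hh1; ring).
    rewrite E.
    assert (Hw : 2 + a <= z + 1 + 1) by lra.
    pose proof (pos_INR m). pose proof (pos_INR (m - 1)).
    eapply Rle_trans. apply abs3.
    + apply Rmult_le_pos; assumption.
    + nra.
    + nra.
    + apply (hh_bound _ a _ t Ha Hw). lra.
    + apply (hh_bound _ a _ t Ha Hw). lra.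
    + apply (hh_bound _ a _ t Ha Hw). lra.
    + fold (K (m - 1 - 1)%nat) (K (m - 1)%nat) (K m).
      assert (Hinv : / t ^ 2 <= / x ^ 2).
      { apply Rinv_le_contravar. apply pow_lt; lra. apply pow_incr. lra. }
      assert (Hinv0 : 0 <= / t ^ 2) by (apply Rlt_le, Rinv_0_lt_compat, Ht2).
      pose proof (HK (m - 1 - 1)%nat). pose proof (HK (m - 1)%nat). pose proof (HK m).
      unfold Rdiv.
      apply Rle_trans with ((INR m * INR (m - 1) * K (m - 1 - 1)%nat + (INR m * (z + 1) + z * INR m) * K (m - 1)%nat + z * (z + 1) * K m) * / t ^ 2).
      * right. ring.
      * apply Rmult_le_compat.
        -- apply Rplus_le_le_0_compat. apply Rplus_le_le_0_compat.
           apply Rmult_le_pos; [apply Rmult_le_pos|]; assumption. apply Rmult_le_pos; nra. apply Rmult_le_pos; nra.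
        -- exact Hinv0.
        -- apply Rplus_le_compat. apply Rplus_le_compat. lra.
           apply Rmult_le_compat_r. assumption. nra.
           apply Rmult_le_compat_r. assumption. nra.
        -- exact Hinv.
Qed.
Lemma lin4 (f1 f2 f3 f4 : R -> R) t d1 d2 d3 d4 :
  is_derive f1 t d1 -> is_derive f2 t d2 -> is_derive f3 t d3 -> is_derive f4 t d4 ->
  is_derive (fun t => f1 t - f2 t + f3 t / 2 + f4 t / 2) t (d1 - d2 + d3 / 2 + d4 / 2).
Proof.
  intros H1 H2 H3 H4.
  exact (@is_derive_plus R_AbsRing R_NormedModule _ _ _ _ _
           (@is_derive_plus R_AbsRing R_NormedModule _ _ _ _ _
              (@is_derive_minus R_AbsRing R_NormedModule _ _ _ _ _ H1 H2)
              (@is_derive_scal_l R_AbsRing R_NormedModule f3 t d3 (/2) H3))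
           (@is_derive_scal_l R_AbsRing R_NormedModule f4 t d4 (/2) H4)).
Qed.

Definition G m z q := hh m z q - hh m z (q + 1) + hh m z (q + 2) / 2
  + Series (fun j => Dh m z (2 * INR j + 2 + q)) / 2.

Lemma Dh_series_bound m a A : 0 < a -> exists C, forall z q j, a <= z <= A -> 0 <= q ->
  Rabs (Dh m z (2 * INR j + 2 + q)) <= C * / (INR j + 1) ^ 2.
Proof.
  intros Ha. destruct (Dh_bound m a A Ha) as [C HC].
  exists C. intros z q j Hz Hq.
  pose proof (pos_INR j).
  assert (Hx : 1 <= 2 * INR j + 2 + q) by lra.
  specialize (HC z _ Hz Hx).
  assert (Hx2 : 0 < (2 * INR j + 2 + q) ^ 2) by (apply pow_lt; lra).
  assert (HC0 : 0 <= C).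
  { assert (0 <= C / (2 * INR j + 2 + q) ^ 2) by (eapply Rle_trans; [apply Rabs_pos | exact HC]).
    unfold Rdiv in H0. apply Rmult_le_reg_r with (/ (2 * INR j + 2 + q) ^ 2).
    apply Rinv_0_lt_compat; exact Hx2. lra. }
  eapply Rle_trans. exact HC. unfold Rdiv. apply Rmult_le_compat_l. exact HC0.
  apply Rinv_le_contravar. apply pow_lt; lra. apply pow_incr. lra.
Qed.

Lemma Dh_ex m z q : 0 < z -> 0 <= q -> ex_series (fun j => Dh m z (2 * INR j + 2 + q)).
Proof.
  intros Hz Hq. destruct (Dh_series_bound m z z Hz) as [C HC].
  apply (exR_le _ (fun j => C * / (INR j + 1) ^ 2)).
  intros j. apply HC; lra. apply exR_scal. apply ex_series_inv_sq.
Qed.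

Lemma Dh_dz m z x : is_derive (fun z => Dh m z x) z (Dh (S m) z x).
Proof.
  unfold Dh, hh. auto_derive. auto. simpl. ring.
Qed.

Lemma G_dz m z q : 0 < z -> 0 < q -> is_derive (fun z => G m z q) z (G (S m) z q).
Proof.
  intros Hz Hq. unfold G.
  destruct (Dh_series_bound (S m) (z / 2) (3 * z / 2)) as [C HC]; [lra|].
  apply (lin4 (fun z => hh m z q) (fun z => hh m z (q + 1)) (fun z => hh m z (q + 2))
              (fun z => Series (fun j => Dh m z (2 * INR j + 2 + q)))).
  apply hh_dz. apply hh_dz. apply hh_dz.
  apply (deriv_series (fun j z => Dh m z (2 * INR j + 2 + q)) (fun j z => Dh (S m) z (2 * INR j + 2 + q))
           (fun j => C * / (INR j + 1) ^ 2) z (z / 2)).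
  - lra.
  - intros j t _. apply Dh_dz.
  - intros j t Ht. apply HC. split_Rabs; lra. lra.
  - apply exR_scal. apply ex_series_inv_sq.
  - intros t Ht. apply Dh_ex. split_Rabs; lra. lra.
Qed.

Lemma is_derive_shiftl (f : R -> R) c t d : is_derive f (c + t) d -> is_derive (fun t => f (c + t)) t d.
Proof.
  intros H. apply (is_derive_ext (fun t => f (t + c))). intros; f_equal; ring.
  apply is_derive_shift. rewrite Rplus_comm. exact H.
Qed.

Lemma lin3 (f1 f2 f3 : R -> R) t d1 d2 d3 :
  is_derive f1 t d1 -> is_derive f2 t d2 -> is_derive f3 t d3 ->
  is_derive (fun t => f1 t - 2 * f2 t + f3 t) t (d1 - 2 * d2 + d3).
Proof.
  intros H1 H2 H3.
  exact (@is_derive_plus R_AbsRing R_NormedModule _ _ _ _ _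
              (@is_derive_minus R_AbsRing R_NormedModule _ _ _ _ _ H1 (is_derive_scal f2 t 2 d2 H2)) H3).
Qed.

Definition Dh1 m z x := - INR m * Dh (m - 1) (z + 1) x - z * Dh m (z + 1) x.

Lemma Dh_dx m z x : 0 < x -> is_derive (fun x => Dh m z x) x (Dh1 m z x).
Proof.
  intros Hx.
  assert (H : is_derive (fun x => Dh m z x) x (hh1 m z x - 2 * hh1 m z (x + 1) + hh1 m z (x + 2))).
  { unfold Dh. apply (lin3 (fun x => hh m z x) (fun x => hh m z (x + 1)) (fun x => hh m z (x + 2))).
    apply hh_dx; lra. apply is_derive_shift, hh_dx; lra. apply is_derive_shift, hh_dx; lra. }
  replace (Dh1 m z x) with (hh1 m z x - 2 * hh1 m z (x + 1) + hh1 m z (x + 2)). exact H.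
  unfold Dh1, Dh, hh1. ring.
Qed.

Lemma G_dq m z q : 0 < z -> 0 < q ->
  is_derive (fun q => G m z q) q (- INR m * G (m - 1) (z + 1) q - z * G m (z + 1) q).
Proof.
  intros Hz Hq.
  destruct (Dh_series_bound (m - 1) (z + 1) (z + 1)) as [C1 HC1]; [lra|].
  destruct (Dh_series_bound m (z + 1) (z + 1)) as [C2 HC2]; [lra|].
  assert (H : is_derive (fun q => G m z q) q
     (hh1 m z q - hh1 m z (q + 1) + hh1 m z (q + 2) / 2 + Series (fun j => Dh1 m z (2 * INR j + 2 + q)) / 2)).
  { unfold G.
    apply (lin4 (fun q => hh m z q) (fun q => hh m z (q + 1)) (fun q => hh m z (q + 2))
              (fun q => Series (fun j => Dh m z (2 * INR j + 2 + q)))).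
    apply hh_dx; lra. apply is_derive_shift, hh_dx; lra. apply is_derive_shift, hh_dx; lra.
    apply (deriv_series (fun j q => Dh m z (2 * INR j + 2 + q)) (fun j q => Dh1 m z (2 * INR j + 2 + q))
           (fun j => (INR m * C1 + z * C2) * / (INR j + 1) ^ 2) q (q / 2)).
    - lra.
    - intros j t Ht. apply is_derive_shiftl. apply Dh_dx. pose proof (pos_INR j). split_Rabs; lra.
    - intros j t Ht. unfold Dh1.
      assert (Ht0 : 0 <= t) by (split_Rabs; lra).
      specialize (HC1 (z + 1) t j (conj (Rle_refl _) (Rle_refl _)) Ht0).
      specialize (HC2 (z + 1) t j (conj (Rle_refl _) (Rle_refl _)) Ht0).
      pose proof (pos_INR m).
      eapply Rle_trans. apply Rabs_triang. rewrite Rabs_Ropp, !Rabs_mult, Rabs_Ropp, (Rabs_pos_eq (INR m)), (Rabs_pos_eq z) by lra.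
      rewrite Rmult_plus_distr_r. apply Rplus_le_compat.
      rewrite Rmult_assoc. apply Rmult_le_compat_l; lra.
      rewrite Rmult_assoc. apply Rmult_le_compat_l; lra.
    - apply exR_scal. apply ex_series_inv_sq.
    - intros t Ht. apply Dh_ex. lra. split_Rabs; lra. }
  replace (- INR m * G (m - 1) (z + 1) q - z * G m (z + 1) q) with
     (hh1 m z q - hh1 m z (q + 1) + hh1 m z (q + 2) / 2 + Series (fun j => Dh1 m z (2 * INR j + 2 + q)) / 2).
  exact H.
  unfold Dh1. rewrite Series_minus, !Series_scal_l.
  unfold G, hh1. field.
  apply exR_scal, Dh_ex; lra.
  apply exR_scal, Dh_ex; lra.
Qed.

Lemma INR_unbounded M : exists N, forall n, (N <= n)%nat -> M < INR n.
Proof.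
  destruct (proj2 (is_lim_seq_spec INR p_infty) is_lim_seq_INR M) as [N HN]. exists N. exact HN.
Qed.

Lemma alt_partial (u : nat -> R) N :
  sum_f_R0 (fun i => (-1) ^ i * u i) (2 * N + 3) =
  u 0%nat - u 1%nat + (u 2%nat - u (2 * N + 4)%nat) / 2
  + sum_f_R0 (fun j => u (2 * j + 2)%nat - 2 * u (2 * j + 3)%nat + u (2 * j + 4)%nat) N / 2.
Proof.
  induction N as [|N IH].
  - simpl. field.
  - replace (2 * S N + 3)%nat with (S (S (2 * N + 3))) by lia.
    rewrite tech5, tech5, IH, tech5.
    replace (S (S (2 * N + 3))) with (S (2 * (N + 2))) by lia.
    replace (S (2 * N + 3)) with (2 * (N + 2))%nat by lia.
    rewrite pow_1_odd, pow_1_even.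
    replace (2 * (N + 2))%nat with (2 * N + 4)%nat by lia.
    replace (S (2 * (N + 2))) with (2 * N + 5)%nat by lia.
    replace (2 * S N + 2)%nat with (2 * N + 4)%nat by lia.
    replace (2 * S N + 3)%nat with (2 * N + 5)%nat by lia.
    replace (2 * S N + 4)%nat with (2 * N + 6)%nat by lia.
    replace (S (2 * N + 4)) with (2 * N + 5)%nat by lia. field.
Qed.

Lemma alt_series (u : nat -> R) :
  (forall eps, 0 < eps -> exists N, forall n, (N <= n)%nat -> Rabs (u n) < eps) ->
  ex_series (fun j => u (2 * j + 2)%nat - 2 * u (2 * j + 3)%nat + u (2 * j + 4)%nat) ->
  is_series (fun i => (-1) ^ i * u i)
    (u 0%nat - u 1%nat + u 2%nat / 2 + Series (fun j => u (2 * j + 2)%nat - 2 * u (2 * j + 3)%nat + u (2 * j + 4)%nat) / 2).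
Proof.
  intros Hu HD.
  set (D := fun j => u (2 * j + 2)%nat - 2 * u (2 * j + 3)%nat + u (2 * j + 4)%nat).
  fold D in HD |- *.
  pose proof (proj1 (is_lim_seq_Reals _ _) (Series_correct _ HD)) as HS.
  apply is_series_Reals. intros eps Heps.
  destruct (HS eps Heps) as [N1 HN1].
  destruct (Hu eps Heps) as [N2 HN2].
  exists (2 * (N1 + N2) + 3)%nat. intros n Hn. unfold R_dist.
  assert (Hcase : exists N, (N1 + N2 <= N)%nat /\ (n = 2 * N + 3 \/ n = 2 * N + 4)%nat).
  { destruct (even_odd_cor n) as [p [Hp|Hp]].
    - exists (p - 2)%nat. lia.
    - exists (p - 1)%nat. lia. }
  destruct Hcase as [N [HN Hn']].
  specialize (HN1 N ltac:(lia)). rewrite sum_n_Reals in HN1. unfold R_dist in HN1.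
  specialize (HN2 (2 * N + 4)%nat ltac:(lia)).
  destruct Hn' as [-> | ->].
  - rewrite alt_partial. fold D. split_Rabs; lra.
  - replace (2 * N + 4)%nat with (S (2 * N + 3)) at 1 by lia.
    rewrite tech5, alt_partial. fold D.
    replace (S (2 * N + 3)) with (2 * (N + 2))%nat by lia. rewrite pow_1_even.
    replace (2 * (N + 2))%nat with (2 * N + 4)%nat by lia.
    split_Rabs; lra.
Qed.

Lemma hh0_decay z q : 0 < z -> 0 < q ->
  forall eps, 0 < eps -> exists N, forall n, (N <= n)%nat -> Rabs (hh 0 z (INR n + q)) < eps.
Proof.
  intros Hz Hq eps Heps.
  set (K := - ln eps / z).
  destruct (INR_unbounded (exp K)) as [N HN]. exists N. intros n Hn.
  specialize (HN n Hn).
  assert (Hx : exp K < INR n + q) by lra.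
  assert (HlnK : K < ln (INR n + q)).
  { rewrite <- (ln_exp K) at 1. apply ln_increasing. apply exp_pos. exact Hx. }
  unfold hh. simpl. rewrite Rmult_1_l, Rabs_pos_eq by (apply Rlt_le, exp_pos).
  rewrite <- (exp_ln eps) by exact Heps.
  apply exp_increasing.
  assert (Hzk : z * K = - ln eps) by (unfold K; field; lra).
  nra.
Qed.

Lemma zetaE_G z q : 0 < z -> 0 < q -> zetaE z q = G 0 z q.
Proof.
  intros Hz Hq. unfold zetaE.
  set (u := fun i => hh 0 z (INR i + q)).
  rewrite (Series_ext _ (fun i => (-1) ^ i * u i)).
  2:{ intros i. unfold u, hh, Rpower. simpl. rewrite Rmult_1_l. f_equal. f_equal. ring. }
  apply is_series_unique.
  assert (HD : forall j, u (2 * j + 2)%nat - 2 * u (2 * j + 3)%nat + u (2 * j + 4)%nat = Dh 0 z (2 * INR j + 2 + q)).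
  { intros j. unfold u, Dh. rewrite !plus_INR, !mult_INR. simpl.
    replace ((1 + 1) * INR j + (1 + 1) + q) with (2 * INR j + 2 + q) by ring.
    replace ((1 + 1) * INR j + (1 + 1 + 1) + q) with (2 * INR j + 2 + q + 1) by ring.
    replace ((1 + 1) * INR j + (1 + 1 + 1 + 1) + q) with (2 * INR j + 2 + q + 2) by ring. reflexivity. }
  replace (G 0 z q) with (u 0%nat - u 1%nat + u 2%nat / 2 + Series (fun j => u (2 * j + 2)%nat - 2 * u (2 * j + 3)%nat + u (2 * j + 4)%nat) / 2).
  apply alt_series.
  - apply hh0_decay; assumption.
  - apply (ex_series_ext (fun j => Dh 0 z (2 * INR j + 2 + q))). intros j; rewrite HD; reflexivity.
    apply Dh_ex; lra.
  - rewrite (Series_ext _ _ HD). unfold G, u. simpl. f_equal. f_equal. f_equal. f_equal. ring. f_equal. ring. replace (1 + 1 + q) with (q + 2) by ring. reflexivity.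
Qed.

Lemma locally_pos (P : R -> Prop) z : 0 < z -> (forall y, 0 < y -> P y) -> locally z P.
Proof.
  intros Hz H. assert (Hz2 : 0 < z / 2) by lra.
  exists (mkposreal _ Hz2). intros y Hy. apply H.
  change (Rabs (y - z) < z / 2) in Hy. split_Rabs; lra.
Qed.

Lemma zetaE_deriv_G m z q : 0 < z -> 0 < q -> zetaE_deriv m z q = G m z q.
Proof.
  intros Hz Hq. unfold zetaE_deriv. revert z Hz.
  induction m as [|m IH]; intros z Hz.
  - simpl. apply zetaE_G; assumption.
  - simpl. rewrite (Derive_ext_loc _ (fun w => G m w q)).
    apply is_derive_unique. apply G_dz; assumption.
    apply locally_pos. exact Hz. intros y Hy. apply IH. exact Hy.
Qed.

Lemma is_derive_sum_f (f : nat -> R -> R) (d : nat -> R) x N :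
  (forall k, (k <= N)%nat -> is_derive (f k) x (d k)) ->
  is_derive (fun x => sum_f_R0 (fun k => f k x) N) x (sum_f_R0 d N).
Proof.
  intros H. induction N as [|N IH].
  - simpl. apply H. lia.
  - simpl. apply (@is_derive_plus R_AbsRing R_NormedModule).
    apply IH. intros k Hk. apply H. lia. apply H. lia.
Qed.

Lemma sum_shift (u v : nat -> R) L :
  v 0%nat = 0 -> (forall k, (k < L)%nat -> v (S k) = u k) ->
  sum_f_R0 v L = sum_f_R0 u L - u L.
Proof.
  intros H0 HS. induction L as [|L IH].
  - simpl. rewrite H0. ring.
  - rewrite !tech5, IH. rewrite HS by lia. ring. intros k Hk. apply HS. lia.
Qed.

Lemma sum_only0 (f : nat -> R) L : (forall k, (0 < k)%nat -> f k = 0) -> sum_f_R0 f L = f 0%nat.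
Proof.
  intros H. induction L as [|L IH]. reflexivity. rewrite tech5, IH, (H (S L)) by lia. ring.
Qed.

Lemma binom_step l k : (k < l)%nat ->
  INR (fact (S k)) * Binomial.C l (S k) = INR (fact k) * Binomial.C l k * INR (l - k).
Proof.
  intros Hk. unfold Binomial.C.
  replace (l - k)%nat with (S (l - S k)) by lia.
  rewrite (fact_simpl (l - S k)), !mult_INR.
  pose proof (INR_fact_neq_0 k). pose proof (INR_fact_neq_0 (S k)).
  pose proof (INR_fact_neq_0 (l - S k)). pose proof (INR_fact_neq_0 l).
  assert (INR (S (l - S k)) <> 0) by (apply not_0_INR; lia).
  field. repeat split; assumption.
Qed.

Definition Tn l n q := sum_f_R0 (fun k => (-1) ^ k * INR (fact k) * Binomial.C l k *
                     IZR (stirling1 (n + 1) (k + 1)) * G (l - k) (INR n + 1) q) l.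

Lemma Tn_derive l n q : 0 < q -> is_derive (fun q => Tn l n q) q (Tn l (S n) q).
Proof.
  intros Hq. unfold Tn.
  set (b := fun k => (-1) ^ k * INR (fact k) * Binomial.C l k).
  set (s := fun k => IZR (stirling1 (n + 1) k)).
  set (g := fun k => G k (INR n + 1 + 1) q).
  assert (H : is_derive (fun q => sum_f_R0 (fun k => (-1) ^ k * INR (fact k) * Binomial.C l k *
                     IZR (stirling1 (n + 1) (k + 1)) * G (l - k) (INR n + 1) q) l) q
     (sum_f_R0 (fun k => b k * s (k + 1)%nat * (- INR (l - k) * g (l - k - 1)%nat - (INR n + 1) * g (l - k)%nat)) l)).
  { apply (is_derive_sum_f (fun k q => (-1) ^ k * INR (fact k) * Binomial.C l k *
                     IZR (stirling1 (n + 1) (k + 1)) * G (l - k) (INR n + 1) q)).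
    intros k Hk. unfold b, s, g. apply is_derive_scal. apply G_dq. pose proof (pos_INR n). lra. exact Hq. }
  replace (sum_f_R0 (fun k => (-1) ^ k * INR (fact k) * Binomial.C l k *
             IZR (stirling1 (S n + 1) (k + 1)) * G (l - k) (INR (S n) + 1) q) l)
    with (sum_f_R0 (fun k => b k * s (k + 1)%nat * (- INR (l - k) * g (l - k - 1)%nat - (INR n + 1) * g (l - k)%nat)) l).
  exact H.
  set (u := fun k => b k * s (k + 1)%nat * (- INR (l - k)) * g (l - k - 1)%nat).
  set (v := fun k => b k * s k * g (l - k)%nat).
  assert (Hsplit : forall k, b k * s (k + 1)%nat * (- INR (l - k) * g (l - k - 1)%nat - (INR n + 1) * g (l - k)%nat)
                   = u k - (INR n + 1) * (b k * s (k + 1)%nat * g (l - k)%nat)).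
  { intros k. unfold u. ring. }
  assert (Hrhs : forall k, (-1) ^ k * INR (fact k) * Binomial.C l k *
             IZR (stirling1 (S n + 1) (k + 1)) * G (l - k) (INR (S n) + 1) q
             = v k - (INR n + 1) * (b k * s (k + 1)%nat * g (l - k)%nat)).
  { intros k. unfold v, b, s, g. rewrite S_INR.
    replace (S n + 1)%nat with (S (n + 1)) by lia. replace (k + 1)%nat with (S k) by lia.
    simpl stirling1. rewrite minus_IZR, mult_IZR, <- INR_IZR_INZ, plus_INR. simpl (INR 1). ring. }
  rewrite (sum_eq _ _ l (fun k _ => Hsplit k)), (sum_eq _ _ l (fun k _ => Hrhs k)).
  assert (Hlin : forall (a c : nat -> R) N, sum_f_R0 (fun k => a k - (INR n + 1) * c k) N
                 = sum_f_R0 a N - (INR n + 1) * sum_f_R0 c N).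
  { intros a c N. induction N; simpl; [ring | rewrite IHN; ring]. }
  rewrite !Hlin. f_equal.
  rewrite (sum_shift u v l).
  - unfold u. replace (l - l)%nat with 0%nat by lia. simpl (INR 0). ring.
  - unfold v, s. replace (n + 1)%nat with (S n) by lia. simpl. ring.
  - intros k Hk. unfold u, v, b.
    replace (l - S k)%nat with (l - k - 1)%nat by lia.
    replace (k + 1)%nat with (S k) by lia.
    simpl ((-1) ^ S k).
    assert (E := binom_step l k Hk).
    replace (-1 * (-1) ^ k * INR (fact (S k)) * Binomial.C l (S k) * s (S k) * g (l - k - 1)%nat)
      with (-1 * (-1) ^ k * (INR (fact (S k)) * Binomial.C l (S k)) * s (S k) * g (l - k - 1)%nat) by ring.
    rewrite E. ring.
Qed.

Lemma DG l n q : 0 < q -> Derive_n (fun x => G l 1 x) n q = Tn l n q.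
Proof.
  revert q. induction n as [|n IH]; intros q Hq.
  - simpl. unfold Tn. rewrite sum_only0.
    + simpl. rewrite Nat.sub_0_r. unfold Binomial.C. simpl.
      replace (l - 0)%nat with l by lia. replace (0 + 1) with 1 by ring.
      field. apply INR_fact_neq_0.
    + intros k Hk. destruct k as [|k']; [lia|].
      replace (S k' + 1)%nat with (S (S k')) by lia. simpl. ring.
  - simpl. rewrite (Derive_ext_loc _ (fun q => Tn l n q)).
    apply is_derive_unique. apply Tn_derive; assumption.
    apply locally_pos. exact Hq. intros y Hy. apply IH. exact Hy.
Qed.

Theorem theorem3p15 (q : R) (l n : nat) (hq : 0 < q) (hn : (1 <= n)%nat) :
  Derive_n (fun x => gamma_tilde l x) n q =
  (-1) ^ l *
  sum_f_R0 (fun k => (-1) ^ k * INR (fact k) * Binomial.C l k *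
                     IZR (stirling1 (n + 1) (k + 1)) *
                     zetaE_deriv (l - k) (INR n + 1) q) l.
Proof.
  rewrite (Derive_n_ext_loc _ (fun x => (-1) ^ l * G l 1 x)).
  - rewrite Derive_n_scal_l, DG by exact hq. unfold Tn. f_equal.
    apply sum_eq. intros k Hk. f_equal. symmetry. apply zetaE_deriv_G.
    pose proof (pos_INR n). lra. exact hq.
  - apply locally_pos. exact hq. intros y Hy. unfold gamma_tilde.
    rewrite zetaE_deriv_G. reflexivity. lra. exact Hy.
Qed.
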